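(* Let $R>0$ and let $f\colon\mathbb{R}\to(0,\infty)$ be a twice continuously differentiable convex function with $t^2+f(t)^2>R^2$ for all $t$. Let $\alpha(t)=\dfrac{tf'(t)-f(t)}{\sqrt{1+f'(t)^2}}$ and $D=\{t\in\mathbb{R}\mid\alpha(t)<R\}$. Then the function $x\colon D\to\mathbb{R}$, $$x(t)=t+\frac{f'(t)}{2\sqrt{1+f'(t)^2}}\cdot\frac{t^2+f(t)^2-R^2}{R-\alpha(t)},$$ is a bijection from $D$ onto $\mathbb{R}$ and $x'(t)\ne0$ for all $t\in D$.
   Context: Geometrically, with $K$ the closed disk of radius $R$ centered at the origin and $L$ the epigraph of $f$, $(x(t),y(t))$ with $y(t)=f(t)-\frac{1}{2\sqrt{1+f'(t)^2}}\cdot\frac{t^2+f(t)^2-R^2}{R-\alpha(t)}$ is the point equidistant from $K$ and $L$ whose nearest point in $L$ is $(t,f(t))$. *)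

(* Defs.v *)
From Stdlib Require Import Reals.
From Coquelicot Require Import Coquelicot.
Open Scope R_scope.

Definition C2 (f : R -> R) : Prop :=
  forall t, ex_derive f t /\ ex_derive (Derive f) t /\
            continuous (Derive (Derive f)) t.

Definition convex_fun (f : R -> R) : Prop :=
  forall x y l, 0 <= l <= 1 ->
    f (l * x + (1 - l) * y) <= l * f x + (1 - l) * f y.

(* Main.v *)
Require Import Defs.
From Stdlib Require Import Reals Lra Psatz.
From Coquelicot Require Import Coquelicot.
Open Scope R_scope.

Definition alph (f g : R -> R) t := (t * g t - f t) / sqrt (1 + g t ^ 2).
Definition xx (R0 : R) (f g : R -> R) t :=
  t + g t / (2 * sqrt (1 + g t ^ 2)) * ((t ^ 2 + f t ^ 2 - R0 ^ 2) / (R0 - alph f g t)).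

Definition Hyps (R0 : R) (f g g2 : R -> R) : Prop :=
  0 < R0 /\ (forall t, 0 < f t) /\ (forall t, t ^ 2 + f t ^ 2 > R0 ^ 2) /\
  (forall t, is_derive f t (g t)) /\ (forall t, is_derive g t (g2 t)) /\
  (forall t, 0 <= g2 t) /\ (forall a b, f b + g b * (a - b) <= f a).

Lemma cont_of_deriv f t l : is_derive f t l -> continuity_pt f t.
Proof.
  intros H. apply continuity_pt_filterlim. apply (ex_derive_continuous f t).
  exists l; exact H.
Qed.

Lemma cont_ed f x : continuity_pt f x ->
  forall e, 0 < e -> exists d, 0 < d /\ forall y, Rabs (y - x) < d -> Rabs (f y - f x) < e.
Proof.
  intros H e He. destruct (H e He) as [d [Hd H']]. exists d; split; auto.
  intros y Hy. destruct (Req_dec y x) as [->|Hne].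
  - rewrite Rminus_eq_0, Rabs_R0; auto.
  - apply H'. split. split; [exact I| auto]. exact Hy.
Qed.

Lemma sqrt_pos1 (a : R) : 0 < sqrt (1 + a ^ 2).
Proof. apply sqrt_lt_R0. nra. Qed.

Lemma sqrt_sq1 (a : R) : sqrt (1 + a ^ 2) * sqrt (1 + a ^ 2) = 1 + a ^ 2.
Proof. apply sqrt_sqrt. nra. Qed.

Lemma tangent f g : (forall t, is_derive f t (g t)) -> convex_fun f ->
  forall a b, f b + g b * (a - b) <= f a.
Proof.
  intros Hd Hc a b.
  destruct (Rtotal_order a b) as [Hab|[->|Hab]].
  - destruct (Rle_or_lt (f b + g b * (a - b)) (f a)) as [H|H]; auto. exfalso.
    set (gap := f b + g b * (a - b) - f a).
    assert (Hgap : 0 < gap) by (unfold gap; lra).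
    pose proof (proj1 (is_derive_Reals f b (g b)) (Hd b)) as Hl.
    destruct (Hl (gap / (b - a))) as [d Hdl].
    { apply Rdiv_lt_0_compat; lra. }
    pose proof (cond_pos d) as Hdp.
    set (h := Rmin (1/2) (d / (2 * (b - a)))).
    assert (Hh0 : 0 < h).
    { unfold h. apply Rmin_glb_lt; [lra|]. apply Rdiv_lt_0_compat; lra. }
    assert (Hh1 : h <= 1/2) by apply Rmin_l.
    assert (Hh2 : h * (b - a) < d).
    { assert (h <= d / (2 * (b - a))) by apply Rmin_r.
      assert (d / (2 * (b - a)) * (b - a) = d / 2) by (field; lra).
      nra. }
    set (k := h * (a - b)).
    assert (Hk : k <> 0) by (unfold k; nra).
    assert (Hka : Rabs k < d).
    { unfold k. rewrite Rabs_left by nra. lra. }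
    specialize (Hdl k Hk Hka).
    set (Q := (f (b + k) - f b) / k) in Hdl.
    assert (HQ : f (b + k) - f b = Q * k) by (unfold Q; field; auto).
    assert (Hcv := Hc a b h ltac:(lra)).
    replace (h * a + (1 - h) * b) with (b + k) in Hcv by (unfold k; ring).
    apply Rabs_def2 in Hdl. destruct Hdl as [Hq1 Hq2].
    assert (E : gap / (b - a) * (b - a) = gap) by (field; lra).
    assert (h * (Q * (a - b) - (f a - f b)) <= 0).
    { replace (h * (Q * (a - b) - (f a - f b))) with (Q * k - h * (f a - f b)) by (unfold k; ring).
      lra. }
    assert (Q * (a - b) - (f a - f b) <= 0).
    { destruct (Rle_or_lt (Q * (a - b) - (f a - f b)) 0); auto. nra. }
    assert ((Q - g b - gap / (b - a)) * (a - b) > 0) by nra.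
    unfold gap in *. nra.
  - lra.
  - destruct (Rle_or_lt (f b + g b * (a - b)) (f a)) as [H|H]; auto. exfalso.
    set (gap := f b + g b * (a - b) - f a).
    assert (Hgap : 0 < gap) by (unfold gap; lra).
    pose proof (proj1 (is_derive_Reals f b (g b)) (Hd b)) as Hl.
    destruct (Hl (gap / (a - b))) as [d Hdl].
    { apply Rdiv_lt_0_compat; lra. }
    pose proof (cond_pos d) as Hdp.
    set (h := Rmin (1/2) (d / (2 * (a - b)))).
    assert (Hh0 : 0 < h).
    { unfold h. apply Rmin_glb_lt; [lra|]. apply Rdiv_lt_0_compat; lra. }
    assert (Hh1 : h <= 1/2) by apply Rmin_l.
    assert (Hh2 : h * (a - b) < d).
    { assert (h <= d / (2 * (a - b))) by apply Rmin_r.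
      assert (d / (2 * (a - b)) * (a - b) = d / 2) by (field; lra).
      nra. }
    set (k := h * (a - b)).
    assert (Hk : k <> 0) by (unfold k; nra).
    assert (Hka : Rabs k < d).
    { unfold k. rewrite Rabs_right by nra. lra. }
    specialize (Hdl k Hk Hka).
    set (Q := (f (b + k) - f b) / k) in Hdl.
    assert (HQ : f (b + k) - f b = Q * k) by (unfold Q; field; auto).
    assert (Hcv := Hc a b h ltac:(lra)).
    replace (h * a + (1 - h) * b) with (b + k) in Hcv by (unfold k; ring).
    apply Rabs_def2 in Hdl. destruct Hdl as [Hq1 Hq2].
    assert (E : gap / (a - b) * (a - b) = gap) by (field; lra).
    assert (h * (Q * (a - b) - (f a - f b)) <= 0).
    { replace (h * (Q * (a - b) - (f a - f b))) with (Q * k - h * (f a - f b)) by (unfold k; ring).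
      lra. }
    assert (Q * (a - b) - (f a - f b) <= 0).
    { destruct (Rle_or_lt (Q * (a - b) - (f a - f b)) 0); auto. nra. }
    assert ((Q - g b + gap / (a - b)) * (a - b) > 0) by nra.
    unfold gap in *. nra.
Qed.

Lemma mono_of_tangent f g : (forall a b, f b + g b * (a - b) <= f a) ->
  forall a b, a <= b -> g a <= g b.
Proof.
  intros H a b Hab. destruct (Req_dec a b) as [->|Hne]; [lra|].
  pose proof (H a b). pose proof (H b a). nra.
Qed.

Lemma deriv_nonneg g g2 t : (forall a b, a <= b -> g a <= g b) -> is_derive g t g2 -> 0 <= g2.
Proof.
  intros Hm Hd. destruct (Rle_or_lt 0 g2) as [H|H]; auto. exfalso.
  pose proof (proj1 (is_derive_Reals g t g2) Hd) as Hl.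
  destruct (Hl (- g2 / 2)) as [d Hdl]; [lra|].
  pose proof (cond_pos d).
  assert (Hk : d / 2 <> 0) by lra.
  assert (Hka : Rabs (d/2) < d) by (rewrite Rabs_right; lra).
  specialize (Hdl _ Hk Hka). apply Rabs_def2 in Hdl.
  set (Q := (g (t + d / 2) - g t) / (d / 2)) in Hdl.
  assert (HQ : g (t + d/2) - g t = Q * (d/2)) by (unfold Q; field; lra).
  pose proof (Hm t (t + d/2) ltac:(lra)). nra.
Qed.

Definition alphd (f g g2 : R -> R) t :=
  g2 t * (t + f t * g t) / (sqrt (1 + g t ^ 2)) ^ 3.

Lemma alph_deriv R0 f g g2 : Hyps R0 f g g2 -> forall t, is_derive (alph f g) t (alphd f g g2 t).
Proof.
  intros (HR & Hf & HN & Hd & Hd2 & Hg2 & Ht) t.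
  unfold alph, alphd. auto_derive.
  - repeat split; try (eexists; eauto). nra. pose proof (sqrt_pos1 (g t)). simpl in *. lra.
  - change (Derive (fun x => f x) t) with (Derive f t). change (Derive (fun x => g x) t) with (Derive g t). rewrite (is_derive_unique _ _ _ (Hd t)), (is_derive_unique _ _ _ (Hd2 t)).
    pose proof (sqrt_pos1 (g t)) as Hs. pose proof (sqrt_sq1 (g t)) as Hss.
    replace (g t * (g t * 1)) with (g t ^ 2) by ring.
    set (s := sqrt (1 + g t ^ 2)) in *.
    assert (E : t + f t * g t = t * (s * s) - (t * g t - f t) * g t) by (rewrite Hss; ring).
    rewrite E. field. lra.
Qed.

Definition P1 (g : R -> R) t := g t / (2 * sqrt (1 + g t ^ 2)).
Definition P2 R0 (f g : R -> R) t := (t ^ 2 + f t ^ 2 - R0 ^ 2) / (R0 - alph f g t).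

Lemma P1_deriv R0 f g g2 : Hyps R0 f g g2 -> forall t,
  is_derive (P1 g) t (g2 t / (2 * (sqrt (1 + g t ^ 2)) ^ 3)).
Proof.
  intros (HR & Hf & HN & Hd & Hd2 & Hg2 & Ht) t.
  unfold P1. auto_derive.
  - repeat split; try (eexists; eauto). nra. pose proof (sqrt_pos1 (g t)). simpl in *. lra.
  - change (Derive (fun x => g x) t) with (Derive g t).
    rewrite (is_derive_unique _ _ _ (Hd2 t)).
    pose proof (sqrt_pos1 (g t)) as Hs. pose proof (sqrt_sq1 (g t)) as Hss.
    replace (g t * (g t * 1)) with (g t ^ 2) by ring.
    set (s := sqrt (1 + g t ^ 2)) in *.
    assert (E : g2 t = g2 t * (s * s - g t * g t)) by (rewrite Hss; ring).
    rewrite E at 3. field. lra.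
Qed.

Lemma P2_deriv R0 f g g2 : Hyps R0 f g g2 -> forall t, alph f g t < R0 ->
  is_derive (P2 R0 f g) t
   (((2 * t + 2 * f t * g t) * (R0 - alph f g t) + (t ^ 2 + f t ^ 2 - R0 ^ 2) * alphd f g g2 t)
     / (R0 - alph f g t) ^ 2).
Proof.
  intros H t Ht0. pose proof (alph_deriv _ _ _ _ H t) as Ha.
  destruct H as (HR & Hf & HN & Hd & Hd2 & Hg2 & Ht).
  unfold P2. auto_derive.
  - repeat split; try (eexists; eauto). lra.
  - change (Derive (fun x => f x) t) with (Derive f t).
    change (Derive (fun x => alph f g x) t) with (Derive (alph f g) t).
    rewrite (is_derive_unique _ _ _ (Hd t)), (is_derive_unique _ _ _ Ha).
    field. lra.
Qed.

Definition xd R0 (f g g2 : R -> R) t :=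
  let s := sqrt (1 + g t ^ 2) in
  let c := R0 - alph f g t in
  (1 + g t * (t + f t * g t) / (c * s)) *
  (1 + g2 t * (t ^ 2 + f t ^ 2 - R0 ^ 2) / (2 * c * s ^ 3)).

Lemma x_deriv R0 f g g2 : Hyps R0 f g g2 -> forall t, alph f g t < R0 ->
  is_derive (xx R0 f g) t (xd R0 f g g2 t).
Proof.
  intros H t Ht0. pose proof (P1_deriv _ _ _ _ H t) as H1.
  pose proof (P2_deriv _ _ _ _ H t Ht0) as H2.
  change (xx R0 f g) with (fun t => t + P1 g t * P2 R0 f g t).
  auto_derive.
  - repeat split; eexists; eauto.
  - change (Derive (fun x => P1 g x) t) with (Derive (P1 g) t).
    change (Derive (fun x => P2 R0 f g x) t) with (Derive (P2 R0 f g) t).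
    rewrite (is_derive_unique _ _ _ H1), (is_derive_unique _ _ _ H2).
    unfold xd, P1, P2, alphd. pose proof (sqrt_pos1 (g t)) as Hs.
    set (s := sqrt (1 + g t ^ 2)) in *. set (a := alph f g t) in *.
    field. split; lra.
Qed.

Lemma xd_pos R0 f g g2 : Hyps R0 f g g2 -> forall t, alph f g t < R0 -> 0 < xd R0 f g g2 t.
Proof.
  intros H t Ht0. destruct H as (HR & Hf & HN & Hd & Hd2 & Hg2 & Ht).
  pose proof (sqrt_pos1 (g t)) as Hs. pose proof (sqrt_sq1 (g t)) as Hss.
  assert (Hcs : (R0 - alph f g t) * sqrt (1 + g t ^ 2) = R0 * sqrt (1 + g t ^ 2) - (t * g t - f t)).
  { unfold alph. field. lra. }
  unfold xd. cbv zeta.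
  set (s := sqrt (1 + g t ^ 2)) in *. set (c := R0 - alph f g t) in *.
  assert (Hc : 0 < c) by (unfold c; lra).
  assert (E : 1 + g t * (t + f t * g t) / (c * s) =
     (R0 * s + f t * (s * s)) / (c * s)).
  { field_simplify; [|lra|lra]. rewrite Hcs. replace (s ^ 2) with (s * s) by ring. rewrite Hss. f_equal. ring. }
  rewrite E.
  pose proof (Hf t). pose proof (HN t). pose proof (Hg2 t).
  apply Rmult_lt_0_compat.
  - apply Rdiv_lt_0_compat. nra. nra.
  - assert (0 <= g2 t * (t ^ 2 + f t ^ 2 - R0 ^ 2) / (2 * c * s ^ 3)).
    { apply Rdiv_le_0_compat; [nra|]. pose proof (pow_lt s 3 Hs). nra. }
    lra.
Qed.

Lemma sign_out R0 f g g2 : Hyps R0 f g g2 -> forall t, R0 <= alph f g t ->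
  (0 < g t /\ 0 < t) \/ (g t < 0 /\ t < 0).
Proof.
  intros (HR & Hf & HN & Hd & Hd2 & Hg2 & Ht) t H. unfold alph in H.
  pose proof (sqrt_pos1 (g t)) as Hs. set (s := sqrt (1 + g t ^ 2)) in *.
  assert (R0 * s <= t * g t - f t).
  { assert (E : (t * g t - f t) / s * s = t * g t - f t) by (field; lra). nra. }
  pose proof (Hf t).
  assert (0 < t * g t) by nra.
  destruct (Rlt_or_le 0 t) as [Hp|Hp].
  - left. split; nra.
  - right. assert (t <> 0) by (intro; subst; nra). split; nra.
Qed.

Lemma alphd_sign R0 f g g2 : Hyps R0 f g g2 -> forall c,
  (0 < c -> 0 < g c -> 0 <= alphd f g g2 c) /\ (c < 0 -> g c < 0 -> alphd f g g2 c <= 0).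
Proof.
  intros (HR & Hf & HN & Hd & Hd2 & Hg2 & Ht) c. unfold alphd.
  pose proof (sqrt_pos1 (g c)) as Hs. set (s := sqrt (1 + g c ^ 2)) in *.
  pose proof (pow_lt s 3 Hs). pose proof (Hf c). pose proof (Hg2 c).
  split; intros.
  - apply Rdiv_le_0_compat; [|lra]. apply Rmult_le_pos; nra.
  - unfold Rdiv. assert (0 < / s ^ 3) by (apply Rinv_0_lt_compat; lra).
    assert (g2 c * (c + f c * g c) <= 0).
    { assert (c + f c * g c < 0) by nra. nra. }
    nra.
Qed.

Lemma right_out R0 f g g2 : Hyps R0 f g g2 -> forall a, R0 <= alph f g a -> 0 < g a -> 0 < a ->
  forall t, a <= t -> R0 <= alph f g t.
Proof.
  intros H a Ha Hg Hpos t Hat.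
  destruct (Req_dec a t) as [<-|Hne]; auto.
  assert (Hmono := mono_of_tangent f g ltac:(destruct H as (_&_&_&_&_&_&X); exact X)).
  destruct (MVT_gen (alph f g) a t (alphd f g g2)) as [c [Hc E]].
  - intros; apply (alph_deriv _ _ _ _ H).
  - intros; eapply cont_of_deriv; apply (alph_deriv _ _ _ _ H).
  - rewrite Rmin_left in Hc by lra. rewrite Rmax_right in Hc by lra.
    pose proof (proj1 (alphd_sign _ _ _ _ H c) ltac:(lra) ltac:(pose proof (Hmono a c ltac:(lra)); lra)).
    nra.
Qed.

Lemma left_out R0 f g g2 : Hyps R0 f g g2 -> forall a, R0 <= alph f g a -> g a < 0 -> a < 0 ->
  forall t, t <= a -> R0 <= alph f g t.
Proof.
  intros H a Ha Hg Hpos t Hat.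
  destruct (Req_dec a t) as [<-|Hne]; auto.
  assert (Hmono := mono_of_tangent f g ltac:(destruct H as (_&_&_&_&_&_&X); exact X)).
  destruct (MVT_gen (alph f g) t a (alphd f g g2)) as [c [Hc E]].
  - intros; apply (alph_deriv _ _ _ _ H).
  - intros; eapply cont_of_deriv; apply (alph_deriv _ _ _ _ H).
  - rewrite Rmin_left in Hc by lra. rewrite Rmax_right in Hc by lra.
    pose proof (proj2 (alphd_sign _ _ _ _ H c) ltac:(lra) ltac:(pose proof (Hmono c a ltac:(lra)); lra)).
    nra.
Qed.

Lemma D_interval R0 f g g2 : Hyps R0 f g g2 -> forall t1 t t2, t1 <= t <= t2 ->
  alph f g t1 < R0 -> alph f g t2 < R0 -> alph f g t < R0.
Proof.
  intros H t1 t t2 Ht H1 H2. destruct (Rlt_or_le (alph f g t) R0) as [|Hc]; auto.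
  destruct (sign_out _ _ _ _ H t Hc) as [[A B]|[A B]].
  - pose proof (right_out _ _ _ _ H t Hc A B t2 ltac:(lra)). lra.
  - pose proof (left_out _ _ _ _ H t Hc A B t1 ltac:(lra)). lra.
Qed.

Lemma x_incr R0 f g g2 : Hyps R0 f g g2 -> forall t1 t2, t1 < t2 ->
  alph f g t1 < R0 -> alph f g t2 < R0 -> xx R0 f g t1 < xx R0 f g t2.
Proof.
  intros H t1 t2 Ht H1 H2.
  destruct (MVT_gen (xx R0 f g) t1 t2 (xd R0 f g g2)) as [c [Hc E]].
  - rewrite Rmin_left by lra. rewrite Rmax_right by lra.
    intros; apply (x_deriv _ _ _ _ H). apply (D_interval _ _ _ _ H t1 _ t2); auto; lra.
  - rewrite Rmin_left by lra. rewrite Rmax_right by lra.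
    intros; eapply cont_of_deriv; apply (x_deriv _ _ _ _ H).
    apply (D_interval _ _ _ _ H t1 _ t2); auto; lra.
  - rewrite Rmin_left in Hc by lra. rewrite Rmax_right in Hc by lra.
    pose proof (xd_pos _ _ _ _ H c (D_interval _ _ _ _ H t1 _ t2 Hc H1 H2)). nra.
Qed.

Lemma bound_A R0 f g g2 : Hyps R0 f g g2 -> forall t, 0 < t -> alph f g t < R0 ->
  t / 2 - Rabs (g 0) * f 0 / 2 <= xx R0 f g t.
Proof.
  intros H t Ht Ha.
  assert (Hmono := mono_of_tangent f g ltac:(destruct H as (_&_&_&_&_&_&X); exact X)).
  destruct H as (HR & Hf & HN & Hd & Hd2 & Hg2 & Ht').
  pose proof (sqrt_pos1 (g t)) as Hs.
  assert (Hcs : (R0 - alph f g t) * sqrt (1 + g t ^ 2) = R0 * sqrt (1 + g t ^ 2) - (t * g t - f t)).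
  { unfold alph. field. lra. }
  unfold xx. set (s := sqrt (1 + g t ^ 2)) in *. set (c := R0 - alph f g t) in *.
  assert (Hc : 0 < c) by (unfold c; lra).
  pose proof (Hf t) as Hft. pose proof (HN t) as HNt. pose proof (Hf 0) as Hf0.
  set (N := t ^ 2 + f t ^ 2 - R0 ^ 2) in *.
  assert (HC0 : 0 <= Rabs (g 0) * f 0 / 2).
  { pose proof (Rabs_pos (g 0)). apply Rdiv_le_0_compat; nra. }
  set (T := g t / (2 * s) * (N / c)).
  assert (ET : T * (2 * (s * c)) = g t * N) by (unfold T; field; lra).
  destruct (Rle_or_lt 0 (g t)) as [Hg|Hg].
  - assert (0 <= T).
    { unfold T. apply Rmult_le_pos. apply Rdiv_le_0_compat; lra.
      apply Rdiv_le_0_compat; unfold N; lra. }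
    lra.
  - set (G := - g t).
    assert (HG : 0 < G) by (unfold G; lra).
    assert (Hsc : s * c = R0 * s + f t + t * G) by (rewrite Rmult_comm, Hcs; unfold G; ring).
    assert (H1 : G * N <= (t + G * f t) * (s * c)).
    { rewrite Hsc. unfold N. assert (0 < R0 * s) by nra.
      assert (0 <= (t + G * f t) * (R0 * s)) by (apply Rmult_le_pos; nra).
      assert (0 <= t * f t) by nra. assert (0 <= G * G * f t * t).
      { repeat apply Rmult_le_pos; lra. }
      assert (0 <= G * R0 ^ 2) by nra. nra. }
    assert (H2 : - (t + G * f t) / 2 <= T).
    { assert (Hpos : 0 < 2 * (s * c)) by nra.
      assert (E2 : - (t + G * f t) / 2 * (2 * (s * c)) = - (t + G * f t) * (s * c)) by field.
      apply (Rmult_le_reg_r (2 * (s * c))); auto. rewrite E2, ET.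
      replace (g t) with (- G) by (unfold G; ring). lra. }
    assert (H3 : G * f t <= Rabs (g 0) * f 0).
    { pose proof (Hmono 0 t ltac:(lra)).
      rewrite Rabs_left by lra.
      pose proof (Ht' 0 t). assert (f t <= f 0) by nra.
      unfold G. nra. }
    lra.
Qed.

Definition KK R0 (f g : R -> R) t := P1 g t * (t ^ 2 + f t ^ 2 - R0 ^ 2).

Lemma cont_of_ex f t : ex_derive f t -> continuity_pt f t.
Proof. intros [l Hl]. eapply cont_of_deriv; eauto. Qed.

Lemma x_up R0 f g g2 : Hyps R0 f g g2 -> forall M, exists t, alph f g t < R0 /\ M < xx R0 f g t.
Proof.
  intros H M.
  assert (Ha0 : alph f g 0 < R0).
  { destruct H as (HR & Hf & _). unfold alph. pose proof (sqrt_pos1 (g 0)). pose proof (Hf 0).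
    assert ((0 * g 0 - f 0) / sqrt (1 + g 0 ^ 2) < 0).
    { unfold Rdiv. apply Rmult_neg_pos. lra. apply Rinv_0_lt_compat; lra. }
    lra. }
  destruct (Classical_Prop.classic (exists t1, 0 <= t1 /\ R0 <= alph f g t1)) as [[t1 [Ht1 Ht1']]|Hno].
  - set (E := fun t => 0 <= t /\ forall u, 0 <= u <= t -> alph f g u < R0).
    assert (Hb : bound E).
    { exists t1. intros t [Et Et']. destruct (Rle_or_lt t t1); auto.
      pose proof (Et' t1 ltac:(lra)). lra. }
    assert (HE0 : exists x, E x).
    { exists 0. split; [lra|]. intros u Hu. replace u with 0 by lra. auto. }
    destruct (completeness E Hb HE0) as [b [Hub Hlub]].
    assert (Hb0 : 0 <= b) by (apply Hub; split; [lra|]; intros u Hu; replace u with 0 by lra; auto).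
    assert (H1 : forall u, 0 <= u < b -> alph f g u < R0).
    { intros u Hu. destruct (Rlt_or_le (alph f g u) R0) as [|Hc]; auto. exfalso.
      assert (is_upper_bound E u).
      { intros t [Et Et']. destruct (Rle_or_lt t u); auto. pose proof (Et' u ltac:(lra)). lra. }
      pose proof (Hlub u H0). lra. }
    assert (H2 : R0 <= alph f g b).
    { destruct (Rlt_or_le (alph f g b) R0) as [Hc|]; auto. exfalso.
      destruct (cont_ed _ _ (cont_of_deriv _ _ _ (alph_deriv _ _ _ _ H b)) (R0 - alph f g b) ltac:(lra))
        as [d [Hd Hd']].
      assert (E (b + d / 2)).
      { split; [lra|]. intros u Hu. destruct (Rlt_or_le u b). apply H1; lra.
        assert (Hud : Rabs (u - b) < d) by (rewrite Rabs_right; lra).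
        specialize (Hd' u Hud). apply Rabs_def2 in Hd'. lra. }
      pose proof (Hub _ H0). lra. }
    assert (Hbp : 0 < b).
    { destruct (Req_dec b 0); [subst; lra|lra]. }
    assert (Hgb : 0 < g b).
    { destruct (sign_out _ _ _ _ H b H2) as [[A B]|[A B]]; lra. }
    destruct H as (HR & Hf & HN & Hd & Hd2 & Hg2 & Ht').
    assert (HKb : 0 < KK R0 f g b).
    { unfold KK, P1. pose proof (sqrt_pos1 (g b)). pose proof (HN b).
      apply Rmult_lt_0_compat. apply Rdiv_lt_0_compat; lra. lra. }
    assert (HKc : continuity_pt (KK R0 f g) b).
    { apply cont_of_ex. unfold KK, P1. auto_derive.
      repeat split; try (eexists; eauto). nra. pose proof (sqrt_pos1 (g b)). simpl in *. lra. }
    destruct (cont_ed _ _ HKc (KK R0 f g b / 2) ltac:(lra)) as [d1 [Hd1 Hd1']].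
    set (e2 := KK R0 f g b / (2 * (Rabs M + 1))).
    assert (He2 : 0 < e2).
    { unfold e2. apply Rdiv_lt_0_compat; [lra|]. pose proof (Rabs_pos M). lra. }
    assert (He2' : (Rabs M + 1) * e2 = KK R0 f g b / 2).
    { unfold e2. field. pose proof (Rabs_pos M). lra. }
    destruct (cont_ed _ _ (cont_of_deriv _ _ _ (alph_deriv _ _ _ _
         (conj HR (conj Hf (conj HN (conj Hd (conj Hd2 (conj Hg2 Ht'))))))  b)) e2 He2)
        as [d2 [Hd2p Hd2']].
    set (m := Rmin d1 d2).
    assert (Hm : 0 < m) by (unfold m; apply Rmin_glb_lt; lra).
    assert (Hm1 : m <= d1) by apply Rmin_l. assert (Hm2 : m <= d2) by apply Rmin_r.
    set (t := Rmax 0 (b - m / 2)).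
    assert (Ht0 : 0 <= t) by apply Rmax_l.
    assert (Ht1b : b - m / 2 <= t) by apply Rmax_r.
    assert (Htb : t < b) by (unfold t; apply Rmax_lub_lt; lra).
    assert (Hdist : Rabs (t - b) < m) by (rewrite Rabs_left; lra).
    exists t. assert (Hat : alph f g t < R0) by (apply H1; lra). split; auto.
    specialize (Hd1' t ltac:(lra)). specialize (Hd2' t ltac:(lra)).
    apply Rabs_def2 in Hd1'. apply Rabs_def2 in Hd2'.
    set (c := R0 - alph f g t).
    assert (Hc : 0 < c) by (unfold c; lra).
    assert (Hce : c < e2) by (unfold c; lra).
    assert (Ex : xx R0 f g t = t + KK R0 f g t / c).
    { unfold xx, KK, P1, c. field. pose proof (sqrt_pos1 (g t)). lra. }
    rewrite Ex.
    assert (EK : KK R0 f g t / c * c = KK R0 f g t) by (field; lra).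
    pose proof (Rabs_pos M). pose proof (Rle_abs M).
    assert ((Rabs M + 1) * c < (Rabs M + 1) * e2) by nra.
    assert (Rabs M + 1 < KK R0 f g t / c) by nra.
    lra.
  - assert (HC0 : 0 <= Rabs (g 0) * f 0 / 2).
    { destruct H as (HR & Hf & _). pose proof (Hf 0). pose proof (Rabs_pos (g 0)).
      apply Rdiv_le_0_compat; nra. }
    set (t := 2 * (Rabs M + Rabs (g 0) * f 0 / 2) + 1).
    pose proof (Rabs_pos M). pose proof (Rle_abs M).
    assert (Ht : 0 < t) by (unfold t; lra).
    assert (Hat : alph f g t < R0).
    { destruct (Rlt_or_le (alph f g t) R0); auto. exfalso. apply Hno. exists t. split; lra. }
    exists t. split; auto.
    pose proof (bound_A _ _ _ _ H t Ht Hat). unfold t in *. lra.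
Qed.

Lemma refl_hyps R0 f g g2 : Hyps R0 f g g2 ->
  Hyps R0 (fun t => f (- t)) (fun t => - g (- t)) (fun t => g2 (- t)).
Proof.
  intros (HR & Hf & HN & Hd & Hd2 & Hg2 & Ht).
  split; [auto|]. split; [intros; apply Hf|]. split; [|split; [|split; [|split]]].
  - intros t. pose proof (HN (- t)). replace (t ^ 2) with ((- t) ^ 2) by ring. auto.
  - intros t. auto_derive.
    + eexists; eauto.
    + change (Derive (fun x => f x) (- t)) with (Derive f (- t)).
      rewrite (is_derive_unique _ _ _ (Hd (- t))). ring.
  - intros t. auto_derive.
    + eexists; eauto.
    + change (Derive (fun x => g x) (- t)) with (Derive g (- t)).
      rewrite (is_derive_unique _ _ _ (Hd2 (- t))). ring.
  - intros t. apply Hg2.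
  - intros a b. pose proof (Ht (- a) (- b)).
    replace (- g (- b) * (a - b)) with (g (- b) * (- a - - b)) by ring. auto.
Qed.

Lemma refl_alph f g t : alph (fun t => f (- t)) (fun t => - g (- t)) t = alph f g (- t).
Proof.
  unfold alph. replace ((- g (- t)) ^ 2) with (g (- t) ^ 2) by ring. f_equal. ring.
Qed.

Lemma refl_xx R0 f g t : xx R0 (fun t => f (- t)) (fun t => - g (- t)) t = - xx R0 f g (- t).
Proof.
  unfold xx. rewrite refl_alph. replace ((- g (- t)) ^ 2) with (g (- t) ^ 2) by ring.
  replace ((- t) ^ 2) with (t ^ 2) by ring. unfold Rdiv. ring.
Qed.

Lemma down R0 f g g2 : Hyps R0 f g g2 -> forall M, exists t, alph f g t < R0 /\ xx R0 f g t < M.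
Proof.
  intros H M. destruct (x_up _ _ _ _ (refl_hyps _ _ _ _ H) (- M)) as [t [H1 H2]].
  rewrite refl_alph in H1. rewrite refl_xx in H2. exists (- t). split; lra.
Qed.

Lemma main_core R0 f g g2 : Hyps R0 f g g2 ->
  (forall y, exists! t, alph f g t < R0 /\ xx R0 f g t = y) /\
  (forall t, alph f g t < R0 -> exists l, is_derive (xx R0 f g) t l /\ l <> 0).
Proof.
  intros H. split.
  - intros y.
    destruct (down _ _ _ _ H y) as [t1 [Ha1 Hx1]].
    destruct (x_up _ _ _ _ H y) as [t2 [Ha2 Hx2]].
    assert (Hlt : t1 < t2).
    { destruct (Rlt_or_le t1 t2) as [|Hle]; auto. exfalso.
      destruct (Req_dec t1 t2) as [<-|Hne]. lra.
      pose proof (x_incr _ _ _ _ H t2 t1 ltac:(lra) Ha2 Ha1). lra. }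
    destruct (Ranalysis5.IVT_interv (fun t => xx R0 f g t - y) t1 t2) as [z [Hz Ez]].
    + intros a Ha. apply cont_of_ex. auto_derive. eexists.
      apply (x_deriv _ _ _ _ H). apply (D_interval _ _ _ _ H t1 a t2); auto.
    + exact Hlt.
    + lra.
    + lra.
    + assert (Hzd : alph f g z < R0) by (apply (D_interval _ _ _ _ H t1 z t2); auto).
      exists z. split. split; auto. lra.
      intros t' [Ht' Hx']. destruct (Rtotal_order z t') as [Hl|[Heq|Hl]]; auto.
      * pose proof (x_incr _ _ _ _ H z t' Hl Hzd Ht'). lra.
      * pose proof (x_incr _ _ _ _ H t' z Hl Ht' Hzd). lra.
  - intros t Ht. exists (xd R0 f g g2 t). split.
    + apply (x_deriv _ _ _ _ H t Ht).
    + pose proof (xd_pos _ _ _ _ H t Ht). lra.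
Qed.

Theorem theorem7 (R0 : R) (f : R -> R) :
  0 < R0 ->
  (forall t, 0 < f t) ->
  C2 f ->
  convex_fun f ->
  (forall t, t ^ 2 + f t ^ 2 > R0 ^ 2) ->
  let alpha := fun t => (t * Derive f t - f t) / sqrt (1 + Derive f t ^ 2) in
  let D := fun t => alpha t < R0 in
  let x := fun t => t + Derive f t / (2 * sqrt (1 + Derive f t ^ 2))
                        * ((t ^ 2 + f t ^ 2 - R0 ^ 2) / (R0 - alpha t)) in
  (forall y, exists! t, D t /\ x t = y) /\
  (forall t, D t -> exists l, is_derive x t l /\ l <> 0).
Proof.
  intros HR Hf HC Hconv HN alpha D x.
  assert (Hd : forall t, is_derive f t (Derive f t)).
  { intros t. apply Derive_correct. apply (HC t). }
  assert (Hd2 : forall t, is_derive (Derive f) t (Derive (Derive f) t)).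
  { intros t. apply Derive_correct. apply (HC t). }
  assert (Ht : forall a b, f b + Derive f b * (a - b) <= f a) by (apply tangent; auto).
  assert (Hg2 : forall t, 0 <= Derive (Derive f) t).
  { intros t. apply (deriv_nonneg (Derive f) _ t (mono_of_tangent _ _ Ht) (Hd2 t)). }
  exact (main_core R0 f (Derive f) (Derive (Derive f))
     (conj HR (conj Hf (conj HN (conj Hd (conj Hd2 (conj Hg2 Ht))))))).
Qed.
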